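(* For every tree sequence $\pi$, the class $\mathcal{T}_\pi$ contains a BFD-tree, and any two BFD-trees in $\mathcal{T}_\pi$ are isomorphic.
   Context: A tree sequence is the degree sequence of some tree; $\mathcal{T}_\pi$ is the set of all trees with degree sequence $\pi$. For a connected graph with a chosen root $v_0$, a child of a vertex $w$ is a neighbor $v$ of $w$ with $\mathrm{dist}(v_0,v)=\mathrm{dist}(v_0,w)+1$. A BFD-ordering with root $v_0$ is a total ordering $\prec$ of the vertices arising from a breadth-first search starting at $v_0$ (so $v_0$ is first and vertices closer to $v_0$ precede vertices farther from $v_0$) such that: (B1) if $w_1\prec w_2$ then $v_1\prec v_2$ for every child $v_1$ of $w_1$ and every child $v_2$ of $w_2$; (B2) if $v\prec u$ then $d(v)\ge d(u)$, where $d$ denotes degree. A BFD-tree is a tree admitting a BFD-ordering for some root. *)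

(* Defs.v *)
From mathcomp Require Import all_boot.
Set Implicit Arguments. Unset Strict Implicit. Unset Printing Implicit Defensive.

Section Graphs.
Variable T : finType.

Definition simple_graph (e : rel T) : Prop := symmetric e /\ irreflexive e.

Definition connected (e : rel T) : Prop := forall x y : T, connect e x y.

Definition acyclic (e : rel T) : Prop :=
  forall c : seq T, uniq c -> 3 <= size c -> ~~ cycle e c.

Definition is_tree (e : rel T) : Prop :=
  0 < #|T| /\ simple_graph e /\ connected e /\ acyclic e.

Definition deg (e : rel T) (v : T) : nat := #|[set u | e v u]|.

(* graph distance: length of a shortest walk from x to y
   (only meaningful when y is reachable from x) *)
Definition dist (e : rel T) (x y : T) : nat :=
  find (fun k => [exists p : k.-tuple T, path e x p && (last x p == y)])
       (iota 0 #|T|).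

Definition child (e : rel T) (v0 w v : T) : bool :=
  e w v && (dist e v0 v == (dist e v0 w).+1).

(* total orderings of the vertices are represented as duplicate-free
   enumerations s of all vertices; u precedes v iff u occurs before v in s *)
Definition vertex_ordering (s : seq T) : Prop := uniq s /\ forall v, v \in s.
Definition prec (s : seq T) (u v : T) : bool := index u s < index v s.

(* s is an ordering produced by a breadth-first search from v0:
   v0 is first, vertices closer to v0 precede farther ones, and the
   BFS queue discipline holds (the earliest-visited neighbour of an earlier
   non-root vertex precedes, or equals, that of a later one). *)
Definition bfs_ordering (e : rel T) (v0 : T) (s : seq T) : Prop :=
  [/\ vertex_ordering s, head v0 s = v0,
      (forall u v, prec s u v -> dist e v0 u <= dist e v0 v) &
      (forall u v, u != v0 -> v != v0 -> prec s u v ->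
         find (e u) s <= find (e v) s)].

Definition BFD_ordering (e : rel T) (v0 : T) (s : seq T) : Prop :=
  [/\ bfs_ordering e v0 s,
      (forall w1 w2 v1 v2, prec s w1 w2 -> child e v0 w1 v1 ->
          child e v0 w2 v2 -> prec s v1 v2) &
      (forall v u, prec s v u -> deg e u <= deg e v)].

Definition BFD_tree (e : rel T) : Prop :=
  is_tree e /\ exists v0 s, BFD_ordering e v0 s.

End Graphs.

Definition has_degree_seq (n : nat) (e : rel 'I_n) (pi : seq nat) : Prop :=
  perm_eq [seq deg e v | v <- enum 'I_n] pi.

Definition in_T_pi (pi : seq nat) (e : rel 'I_(size pi)) : Prop :=
  is_tree e /\ @has_degree_seq (size pi) e pi.

Definition tree_sequence (pi : seq nat) : Prop :=
  exists e : rel 'I_(size pi), in_T_pi e.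

Definition isomorphic (n : nat) (e1 e2 : rel 'I_n) : Prop :=
  exists f : 'I_n -> 'I_n, bijective f /\ forall x y, e1 x y = e2 (f x) (f y).

(* Main.v *)
Require Import Defs.
From mathcomp Require Import all_boot.
From Stdlib Require Import Lia.
Set Implicit Arguments. Unset Strict Implicit. Unset Printing Implicit Defensive.

Lemma find_le (T : Type) (a : pred T) (s : seq T) x0 i :
  i < size s -> a (nth x0 s i) -> find a s <= i.
Proof. move=> Hi Ha; rewrite leqNgt; apply/negP=> /(before_find x0); by rewrite Ha. Qed.

Lemma find_first (T : eqType) (a : pred T) (s : seq T) x :
  uniq s -> x \in s -> a x -> (forall y, y \in s -> a y -> index x s <= index y s) ->
  find a s = index x s.
Proof.
move=> Us xs ax H; apply/eqP; rewrite eqn_leq; apply/andP; split.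
  apply: (@find_le _ _ _ x); first by rewrite index_mem. by rewrite nth_index.
have hs : has a s by apply/hasP; exists x.
have Hf : find a s < size s by rewrite -has_find.
have ys : nth x s (find a s) \in s by apply: mem_nth.
have := H _ ys (nth_find x hs). by rewrite index_uniq.
Qed.

Lemma card_count (T : finType) (s : seq T) (P : pred T) :
  uniq s -> (forall x, x \in s) -> #|[set x | P x]| = count P s.
Proof.
move=> Us Hs; rewrite -size_filter -(card_uniqP (filter_uniq P Us)).
apply: eq_card => x; by rewrite inE mem_filter Hs andbT.
Qed.

Lemma count_lt_iota b n : count (fun k => k < b) (iota 0 n) = minn b n.
Proof.
elim: n => [|n IH]; first by rewrite minn0.
rewrite -addn1 iotaD count_cat IH /= add0n addn0.
case: (ltnP n b) => Hnb.
- have -> : minn b (n + 1) = n + 1 by apply/minn_idPr; rewrite addn1.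
  by rewrite addn1.
- have -> : minn b (n + 1) = b by apply/minn_idPl; rewrite addn1 (leq_trans Hnb).
  by rewrite addn0.
Qed.

Lemma count_interval a b n : a <= b -> b <= n ->
  count (fun j => a <= j < b) (iota 0 n) = b - a.
Proof.
move=> Hab Hbn.
have := count_predUI (fun j => a <= j < b) (fun j => j < a) (iota 0 n).
rewrite (@eq_count _ (predU _ _) (fun j => j < b)); last first.
  move=> j /=; case: (ltnP j a) => Hj /=; last by rewrite orbF.
  by rewrite (leq_trans Hj Hab).
rewrite (@eq_count _ (predI _ _) pred0); last first.
  by move=> j /=; case: (ltnP j a) => _; rewrite ?andbF.
rewrite count_pred0 !count_lt_iota addn0.
have -> : minn b n = b by apply/minn_idPl.
have -> : minn a n = a by apply/minn_idPl; exact: (leq_trans Hab Hbn).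
move=> H; by rewrite [b in RHS]H addnK.
Qed.

Lemma count_dc (p : pred nat) n :
  (forall a b, a <= b -> b < n -> p b -> p a) ->
  forall k, (k < count p (iota 0 n)) = (k < n) && p k.
Proof.
elim: n => [|n IH] H k; first by rewrite /= ltn0.
have H' : forall a b, a <= b -> b < n -> p b -> p a.
  by move=> a b Hab Hb; apply: H => //; apply: ltn_trans Hb _.
have Hi : iota 0 n.+1 = iota 0 n ++ [:: n] by rewrite -addn1 iotaD.
rewrite Hi count_cat /= addn0.
case Hpn: (p n).
- have -> : count p (iota 0 n) = n.
    rewrite -[RHS](size_iota 0 n) -count_predT; apply: eq_in_count => j.
    rewrite mem_iota add0n /= => Hj; apply: (H j n); [exact: ltnW | by [] | by rewrite Hpn].
  rewrite addn1 ltnS; case: (leqP k n) => Hk /=; last by [].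
  by rewrite (H k n).
- rewrite addn0 IH // ltnS [k <= n]leq_eqVlt.
  case: (eqVneq k n) => [->|] /=; first by rewrite ltnn Hpn andbF.
  by [].
Qed.

Section Dist.
Variable T : finType.
Variable e : rel T.

Definition walk k x y := exists p, [/\ size p = k, path e x p & last x p = y].

Lemma walkP k x y :
  reflect (walk k x y) [exists p : k.-tuple T, path e x p && (last x p == y)].
Proof.
apply: (iffP existsP) => [[p /andP[H1 /eqP H2]] | [p [Hs H1 H2]]].
  by exists p; rewrite size_tuple.
have Hs' : size p == k by rewrite Hs.
exists (Tuple Hs') => /=. by rewrite H1 H2 eqxx.
Qed.

Lemma dist_le k x y : walk k x y -> dist e x y <= k.
Proof.
move=> W; rewrite /dist.
case: (ltnP k #|T|) => Hk.
  apply: (@find_le _ _ _ 0); first by rewrite size_iota.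
  by rewrite nth_iota // add0n; apply/walkP.
by apply: leq_trans (find_size _ _) _; rewrite size_iota.
Qed.

Hypothesis Hc : connected e.

Lemma dist_walk x y : walk (dist e x y) x y.
Proof.
have : has (fun k => [exists p : k.-tuple T, path e x p && (last x p == y)]) (iota 0 #|T|).
  have /connectP [p Hp ->] := Hc x y.
  case: (shortenP Hp) => p' Hp' Up' _.
  apply/hasP; exists (size p').
    rewrite mem_iota add0n /=.
    have : size (x :: p') <= #|T| by rewrite -(card_uniqP Up') max_card.
    by [].
  by apply/walkP; exists p'.
move=> H; have := nth_find 0 H.
rewrite nth_iota; last by rewrite -[X in _ < X](size_iota 0 #|T|) -has_find.
by rewrite add0n => /walkP.
Qed.

Lemma dist_self x : dist e x x = 0.
Proof. apply/eqP; rewrite -leqn0; apply: dist_le; by exists [::]. Qed.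

Lemma dist0 x y : dist e x y = 0 -> x = y.
Proof. move=> H; have [p [Hs _ <-]] := dist_walk x y; move: Hs; rewrite H; by case: p. Qed.

Lemma dist_edge x u v : e u v -> dist e x v <= (dist e x u).+1.
Proof.
move=> Huv; have [p [Hs Hp Hl]] := dist_walk x u.
apply: dist_le; exists (rcons p v); split.
- by rewrite size_rcons Hs.
- by rewrite rcons_path Hp Hl Huv.
- by rewrite last_rcons.
Qed.

Lemma dist_pred x v : v != x -> exists u, e u v /\ (dist e x u).+1 = dist e x v.
Proof.
move=> Hv; have [p [Hs Hp Hl]] := dist_walk x v.
case/lastP: p Hs Hp Hl => [|p w] Hs Hp Hl.
  by move: Hv; rewrite -Hl /= eqxx.
move: Hp; rewrite rcons_path => /andP[Hp Hw].
rewrite last_rcons in Hl; subst w.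
exists (last x p); split => //.
apply/eqP; rewrite eqn_leq; apply/andP; split.
  rewrite -Hs size_rcons ltnS; apply: dist_le; by exists p.
exact: dist_edge.
Qed.

End Dist.

Section Tree.
Variable T : finType.
Variable e : rel T.
Hypothesis Hsym : symmetric e.
Hypothesis Hirr : irreflexive e.
Hypothesis Hc : connected e.
Hypothesis Hac : acyclic e.
Variable r : T.

Local Notation d := (dist e r).

Definition pr v := odflt r [pick u | e u v && ((d u).+1 == d v)].

Lemma pr_spec v : v != r -> e (pr v) v /\ (d (pr v)).+1 = d v.
Proof.
move=> Hv; rewrite /pr; case: pickP => [u /andP[H1 /eqP H2] | H] //=.
have [u [H1 H2]] := dist_pred Hc Hv.
by move: (H u); rewrite H1 H2 eqxx.
Qed.

Lemma d_eq0 v : (d v == 0) = (v == r).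
Proof.
apply/eqP/eqP => [/(dist0 Hc) -> // | ->]; exact: dist_self.
Qed.

Lemma d_iter k v : k <= d v -> d (iter k pr v) = d v - k.
Proof.
elim: k => [|k IH] Hk; first by rewrite subn0.
rewrite iterS; have IH' := IH (ltnW Hk).
have Hne : iter k pr v != r by rewrite -d_eq0 IH' subn_eq0 -ltnNge.
have [_ H] := pr_spec Hne; rewrite IH' in H.
by rewrite subnS -H.
Qed.

Lemma iter_root v : iter (d v) pr v = r.
Proof. apply/eqP; by rewrite -d_eq0 d_iter // subnn. Qed.

Lemma up_uniq v n : n <= d v -> uniq (traject pr v n.+1).
Proof.
move=> Hn; rewrite looping_uniq; apply/negP => /trajectP [i Hi Heq].
have := d_iter Hn; rewrite Heq d_iter; last by apply: leq_trans Hn; exact: ltnW.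
move/eqP; rewrite eqn_sub2lE ?(ltnW Hi) //; last exact: leq_trans (ltnW Hi) Hn.
by move/eqP => Hin; move: Hi; rewrite Hin ltnn.
Qed.

Lemma up_path v n : n <= d v -> path e v (traject pr (pr v) n).
Proof.
elim: n v => [|n IH] v Hn //.
have Hv : v != r by rewrite -d_eq0 -lt0n (leq_trans _ Hn).
have [H1 H2] := pr_spec Hv.
rewrite trajectS /= Hsym H1 /=; apply: IH.
by rewrite -ltnS H2.
Qed.

Lemma down_path v n : n <= d v -> path e (iter n pr v) (rev (traject pr v n)).
Proof.
elim: n => [|n IH] Hn //.
rewrite trajectSr rev_rcons /= IH ?(ltnW Hn) // andbT.
have Hv : iter n pr v != r by rewrite -d_eq0 d_iter ?(ltnW Hn) // subn_eq0 -ltnNge.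
by have [] := pr_spec Hv.
Qed.

Lemma no_cycle_chains u w m :
  u != w -> d u = d w -> uniq m -> (forall x, x \in m -> d u < d x) ->
  path e w (rcons m u) -> False.
Proof.
move=> Huw Hd Um Hm Hp.
have ex : exists i, iter i pr u == iter i pr w.
  by exists (d u); rewrite {2}Hd !iter_root.
case: (ex_minnP ex) => t /eqP Ht Hmin.
have Htk : t <= d u by apply: Hmin; rewrite {2}Hd !iter_root.
case: t Ht Hmin Htk => [|t] Ht Hmin Htk; first by move: Huw; rewrite /= in Ht; rewrite Ht eqxx.
set U := traject pr u t.+2.
set W := rev (traject pr w t.+1).
have memU x : x \in U -> exists2 i, i <= t.+1 & x = iter i pr u.
  by case/trajectP => i Hi ->; exists i.
have memW x : x \in W -> exists2 i, i <= t & x = iter i pr w.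
  by rewrite mem_rev; case/trajectP => i Hi ->; exists i.
have dU x : x \in U -> d x <= d u.
  by case/memU => i Hi ->; rewrite d_iter ?leq_subr // (leq_trans Hi).
have dW x : x \in W -> d x <= d u.
  by case/memW => i Hi ->; rewrite d_iter -Hd ?leq_subr // (leq_trans (leqW Hi)).
have Uc : uniq (U ++ W ++ m).
  rewrite cat_uniq (cat_uniq W m) up_uniq // rev_uniq up_uniq -?Hd ?(ltnW Htk) //.
  rewrite Um andbT /=; apply/andP; split.
  - apply/hasP => [[x]]; rewrite mem_cat => /orP [xW | xm] /memU [i Hi Hx].
    + case/memW: xW => l Hl Hx'.
      have Hil : i = l.
        have H1 : i <= d u := leq_trans Hi Htk.
        have H2 : l <= d w by rewrite -Hd (leq_trans (leqW Hl) Htk).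
        have := congr1 d (etrans (esym Hx) Hx'); rewrite d_iter // d_iter // -Hd.
        move/eqP; rewrite eqn_sub2lE //; last by rewrite Hd.
        by move/eqP.
      rewrite -Hil in Hx' Hl; have := Hmin i; rewrite -Hx Hx' eqxx => /(_ isT).
      by rewrite ltnNge Hl.
    + have := Hm x xm; rewrite ltnNge dU //.
      by rewrite Hx /U; apply/trajectP; exists i.
  - by apply/hasP => [[x xm /dW]]; rewrite leqNgt Hm.
have Hsz : 3 <= size (U ++ W ++ m).
  rewrite !size_cat /U /W size_rev !size_traject.
  by rewrite addSn addnS !ltnS leq_addr.
have := Hac Uc Hsz; apply/negP/negPn.
rewrite /U trajectS cat_cons {1}/cycle !rcons_cat.
rewrite cat_path last_traject up_path // Ht /=.
rewrite cat_path.
have HW : path e (pr (iter t pr w)) W by apply: (@down_path w t.+1); rewrite -Hd.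
by rewrite HW /W trajectS rev_cons last_rcons.
Qed.

Lemma edge_neq_d u w : e u w -> d u != d w.
Proof.
move=> H; apply/eqP => Hd.
have Huw : u != w by apply: contraTneq H => ->; rewrite Hirr.
by apply: (@no_cycle_chains u w [::]) => //=; rewrite Hsym H.
Qed.

Lemma lower_unique u w v : e u v -> e w v -> (d u).+1 = d v -> (d w).+1 = d v -> u = w.
Proof.
move=> Hu Hw Hdu Hdw; case: (eqVneq u w) => // Huw; exfalso.
apply: (@no_cycle_chains u w [:: v]) => //=.
- by apply/succn_inj; rewrite Hdu Hdw.
- by move=> x; rewrite inE => /eqP ->; rewrite -Hdu.
- by rewrite Hw Hsym Hu.
Qed.

Lemma edge_d u v : e u v -> (d u).+1 = d v \/ (d v).+1 = d u.
Proof.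
move=> H; have H1 := dist_edge Hc r H; have Hvu : e v u by rewrite Hsym.
have H2 := dist_edge Hc r Hvu.
have H3 := edge_neq_d H.
case: (ltngtP (d u) (d v)) H3 => // Hl _.
- by left; apply/eqP; rewrite eqn_leq Hl H1.
- by right; apply/eqP; rewrite eqn_leq Hl H2.
Qed.

Lemma pr_unique u v : e u v -> (d u).+1 = d v -> u = pr v.
Proof.
move=> H Hd; have Hv : v != r by rewrite -d_eq0 -Hd.
have [H1 H2] := pr_spec Hv; exact: lower_unique H H1 Hd H2.
Qed.

Lemma parent_form x y :
  e x y = ((x != r) && (pr x == y)) || ((y != r) && (pr y == x)).
Proof.
apply/idP/idP.
- move=> H; case: (edge_d H) => Hd.
  + have Hy : y != r by rewrite -d_eq0 -Hd.
    by rewrite Hy (pr_unique H Hd) eqxx orbT.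
  + have Hx : x != r by rewrite -d_eq0 -Hd.
    by rewrite Hx -(pr_unique _ Hd) ?eqxx // Hsym.
- case/orP => /andP[Hr /eqP <-]; have [H1 _] := pr_spec Hr => //.
  by rewrite Hsym.
Qed.

End Tree.

Section ParentGraph.
Variable T : finType.
Variables (e : rel T) (r : T) (p : T -> T) (h : T -> nat).
Hypothesis Hh : forall v, v != r -> h (p v) < h v.
Hypothesis He : forall x y, e x y = ((x != r) && (p x == y)) || ((y != r) && (p y == x)).

Lemma deg_parent v : deg e v = (v != r) + #|[set u | (u != r) && (p u == v)]|.
Proof.
rewrite /deg; case: (eqVneq v r) => [->|Hv] /=.
  rewrite add0n; apply: eq_card => u; by rewrite !inE He eqxx.
have -> : [set u | e v u] = p v |: [set u | (u != r) && (p u == v)].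
  by apply/setP => u; rewrite !inE He Hv /= eq_sym.
rewrite cardsU1; suff -> : p v \notin [set u | (u != r) && (p u == v)] by [].
rewrite inE; apply/negP => /andP[Hpv /eqP Hppv].
have := Hh Hpv; rewrite Hppv => H; have := ltn_trans H (Hh Hv).
by rewrite ltnn.
Qed.

Lemma handshake : \sum_(v : T) deg e v = (#|T|.-1).*2.
Proof.
under eq_bigr => v _ do rewrite deg_parent.
rewrite big_split /= -addnn; congr (_ + _).
- rewrite (bigD1 r) //= eqxx add0n -(cardsC1 r) -sum1dep_card.
  by apply: eq_big => [x|x Hx]; rewrite ?inE ?Hx.
- rewrite -(cardsC1 r) -sum1dep_card [RHS](partition_big p predT) //=.
  apply: eq_bigr => v _; rewrite sum1dep_card; apply: eq_card => u; by rewrite !inE.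
Qed.

End ParentGraph.

Definition Cf (pi : seq nat) (i : nat) : nat :=
  \sum_(0 <= k < i) (nth 0 (sort geq pi) k - (0 < k)).

Lemma iota1 n : iota 1 n = map S (iota 0 n).
Proof. rewrite (iotaDl 1 0 n); apply: eq_map => x; by rewrite add1n. Qed.

Section BFDu.
Variable T : finType.
Variable e : rel T.
Hypothesis Ht : is_tree e.
Variables (v0 : T) (s : seq T).
Hypothesis Hs : BFD_ordering e v0 s.

Definition Qf j := index (pr e v0 (nth v0 s j)) s.

Let Hsym : symmetric e. Proof. by case: Ht => _ [[]]. Qed.
Let Hirr : irreflexive e. Proof. by case: Ht => _ [[]]. Qed.
Let Hc : connected e. Proof. by case: Ht => _ [_ []]. Qed.
Let Hac : acyclic e. Proof. by case: Ht => _ [_ []]. Qed.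
Let Us : uniq s. Proof. by case: Hs => [[[]]]. Qed.
Let Alls : forall x, x \in s. Proof. by case: Hs => [[[]]]. Qed.
Let Hhead : head v0 s = v0. Proof. by case: Hs => [[]]. Qed.
Let Hdist : forall u v, prec s u v -> dist e v0 u <= dist e v0 v.
Proof. by case: Hs => [[]]. Qed.
Let Hfind : forall u v, u != v0 -> v != v0 -> prec s u v -> find (e u) s <= find (e v) s.
Proof. by case: Hs => [[]]. Qed.
Let HB2 : forall v u, prec s v u -> deg e u <= deg e v.
Proof. by case: Hs. Qed.

Local Notation d := (dist e v0).
Local Notation prp := (pr e v0).
Local Notation pos x := (index x s).
Local Notation ath i := (nth v0 s i).
Local Notation n := (size s).

Let prs v : v != v0 -> e (prp v) v /\ (d (prp v)).+1 = d v.
Proof. exact: pr_spec. Qed.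
Let pform x y : e x y = ((x != v0) && (prp x == y)) || ((y != v0) && (prp y == x)).
Proof. exact: parent_form. Qed.

Lemma size_s : n = #|T|.
Proof. rewrite -(card_uniqP Us); apply: eq_card => x; by rewrite Alls. Qed.

Lemma pos_lt x : pos x < n.
Proof. by rewrite index_mem. Qed.

Lemma at_pos x : ath (pos x) = x.
Proof. exact: nth_index. Qed.

Lemma pos_at i : i < n -> pos (ath i) = i.
Proof. move=> Hi; exact: index_uniq. Qed.

Lemma pos_v0 : pos v0 = 0.
Proof. have := Alls v0; move: Hhead; case: s => [|x s'] //= ->; by rewrite eqxx. Qed.

Lemma pos_eq0 x : (pos x == 0) = (x == v0).
Proof.
apply/eqP/eqP => [H|->]; last exact: pos_v0.
by rewrite -(at_pos x) H -pos_v0 at_pos.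
Qed.

Lemma pos_inj x y : (pos x == pos y) = (x == y).
Proof.
apply/eqP/eqP => [H|->] //; by rewrite -(at_pos x) H at_pos.
Qed.

Lemma find_pr v : v != v0 -> find (e v) s = pos (prp v).
Proof.
move=> Hv; apply: find_first => //.
  by have [H _] := prs Hv; rewrite Hsym.
move=> y _; rewrite pform Hv /= => /orP [/eqP -> // | /andP [Hy /eqP Hpy]].
rewrite leqNgt; apply/negP => Hlt.
have := Hdist Hlt.
have [_ H1] := prs Hv; have [_ H2] := prs Hy.
rewrite Hpy in H2; rewrite -H2 -H1 => H.
by have := leq_trans H (leqnSn _); rewrite ltnn.
Qed.

Lemma mono u w : u != v0 -> w != v0 -> pos u <= pos w -> pos (prp u) <= pos (prp w).
Proof.
move=> Hu Hw; rewrite leq_eqVlt => /orP [|Hlt].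
  by rewrite pos_inj => /eqP ->.
rewrite -!find_pr //; exact: Hfind.
Qed.

Definition Af i := count (fun w => (w != v0) && (index (prp w) s < i)) s.

Lemma U2 u i : u != v0 -> (pos (prp u) < i) = (pos u <= Af i).
Proof.
move=> Hu.
have -> : Af i = count (fun k => (ath k != v0) && (pos (prp (ath k)) < i)) (iota 0 n).
  by rewrite /Af -[X in count _ X](mkseq_nth v0 s) /mkseq count_map.
have Hn : 0 < n by apply: leq_ltn_trans (pos_lt v0).
rewrite -(prednK Hn) /= iota1 count_map.
have -> : ath 0 = v0 by rewrite -{2}(at_pos v0) pos_v0.
rewrite eqxx /= add0n.
have Hpu : 0 < pos u by rewrite lt0n pos_eq0.
rewrite -(prednK Hpu) count_dc.
- rewrite prednK //; have := pos_lt u; rewrite -{1}(prednK Hn) ltnS => ->.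
  by rewrite /= prednK // at_pos Hu.
- move=> a b Hab Hb /=.
  have Hb' : b.+1 < n by rewrite -(prednK Hn) ltnS.
  have Ha' : a.+1 < n by apply: leq_ltn_trans Hb'.
  have Hna : ath a.+1 != v0 by rewrite -pos_eq0 pos_at.
  have Hnb : ath b.+1 != v0 by rewrite -pos_eq0 pos_at.
  rewrite Hna Hnb /= => Hlt.
  apply: leq_ltn_trans Hlt; apply: mono => //.
  by rewrite !pos_at.
Qed.

Lemma prp_eq w i : i < n -> (prp w == ath i) = (pos (prp w) == i).
Proof.
move=> Hi; apply/eqP/eqP => [->|<-]; [exact: pos_at | by rewrite at_pos].
Qed.

Lemma U3 i : i < n ->
  Af i.+1 = Af i + count (fun w => (w != v0) && (prp w == ath i)) s.
Proof.
move=> Hi; rewrite /Af.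
have := count_predUI (fun w => (w != v0) && (pos (prp w) < i))
                     (fun w => (w != v0) && (prp w == ath i)) s.
rewrite (@eq_count _ (predI _ _) pred0); last first.
  move=> w /=; rewrite prp_eq //.
  by case: (w != v0) => //=; case: ltngtP.
rewrite count_pred0 addn0 => <-; apply: eq_count => w /=.
rewrite prp_eq // ltnS leq_eqVlt.
by case: (w != v0) => //=; rewrite orbC.
Qed.

Lemma degA i : i < n ->
  deg e (ath i) = (0 < i) + count (fun w => (w != v0) && (prp w == ath i)) s.
Proof.
move=> Hi.
have Hh : forall v, v != v0 -> d (prp v) < d v by move=> v Hv; have [_ <-] := prs Hv.
rewrite (deg_parent Hh pform) (card_count _ Us Alls).
by rewrite -pos_eq0 pos_at // lt0n.
Qed.

Lemma degs pi : perm_eq [seq deg e v | v <- enum T] pi ->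
  [seq deg e v | v <- s] = sort geq pi.
Proof.
move=> Hpi.
have Htr : transitive geq by move=> a b c H1 H2; exact: leq_trans H2 H1.
apply: (sorted_eq Htr).
- by move=> a b /andP[H1 H2]; apply: anti_leq; apply/andP; split; [exact: H2 | exact: H1].
- rewrite sorted_pairwise //; apply/(pairwiseP 0) => i j.
  rewrite !inE size_map => Hi Hj Hij.
  rewrite !(nth_map v0) //; apply: HB2.
  by rewrite /prec !pos_at.
- apply: sort_sorted => a b; exact: leq_total.
- have H1 : perm_eq s (enum T).
    apply: uniq_perm => //; first exact: enum_uniq.
    by move=> x; rewrite Alls mem_enum.
  apply: perm_trans (perm_map (deg e) H1) _; apply: perm_trans Hpi _.
  by rewrite perm_sym perm_sort.
Qed.

Lemma A_Cf pi : perm_eq [seq deg e v | v <- enum T] pi ->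
  forall i, i <= n -> Af i = Cf pi i.
Proof.
move=> Hpi; elim => [|i IH] Hi.
  rewrite /Cf big_geq // /Af (@eq_count _ _ pred0) ?count_pred0 // => w /=.
  by rewrite ltn0 andbF.
rewrite U3 // IH ?(ltnW Hi) // /Cf big_nat_recr //=; congr (_ + _).
have := degA Hi; rewrite -(nth_map v0 0) // (degs Hpi) => ->.
by rewrite addKn.
Qed.

Lemma bfd_summary pi : perm_eq [seq deg e v | v <- enum T] pi ->
 [/\ size s = #|T|, uniq s /\ (forall x, x \in s),
     (forall x y, e x y = ((0 < index x s) && (Qf (index x s) == index y s))
                        || ((0 < index y s) && (Qf (index y s) == index x s))),
     (forall j, Qf j < #|T|) &
     (forall j i, 0 < j < #|T| -> i <= #|T| -> (Qf j < i) = (j <= Cf pi i))].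
Proof.
move=> Hpi; split => //.
- exact: size_s.
- move=> x y; rewrite pform /Qf !at_pos !lt0n !pos_eq0.
  by rewrite !pos_inj.
- by move=> j; rewrite -size_s pos_lt.
- move=> j i /andP[Hj0 Hj] Hi; rewrite -size_s in Hj Hi.
  have Hnj : ath j != v0 by rewrite -pos_eq0 pos_at // -lt0n.
  by rewrite /Qf U2 // pos_at // (A_Cf Hpi).
Qed.

End BFDu.

Lemma bfd_unique (T : finType) (e1 e2 : rel T) pi :
  perm_eq [seq deg e1 v | v <- enum T] pi -> perm_eq [seq deg e2 v | v <- enum T] pi ->
  BFD_tree e1 -> BFD_tree e2 ->
  exists f : T -> T, bijective f /\ forall x y, e1 x y = e2 (f x) (f y).
Proof.
move=> H1 H2 [Ht1 [v1 [s1 Hs1]]] [Ht2 [v2 [s2 Hs2]]].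
have [Hz1 [U1 A1] He1 Hq1 Hc1] := bfd_summary Ht1 Hs1 H1.
have [Hz2 [U2 A2] He2 Hq2 Hc2] := bfd_summary Ht2 Hs2 H2.
have HQ : forall j, 0 < j < #|T| -> Qf e1 v1 s1 j = Qf e2 v2 s2 j.
  move=> j Hj; apply: anti_leq; apply/andP; split.
  - by rewrite -ltnS (Hc1 j _ Hj (Hq2 j)) -(Hc2 j _ Hj (Hq2 j)) ltnS.
  - by rewrite -ltnS (Hc2 j _ Hj (Hq1 j)) -(Hc1 j _ Hj (Hq1 j)) ltnS.
have Hi1 x : index x s1 < #|T| by rewrite -Hz1 index_mem.
have Hi2 x : index x s2 < #|T| by rewrite -Hz2 index_mem.
have P2 k : k < #|T| -> index (nth v2 s2 k) s2 = k.
  by move=> Hk; apply: index_uniq; rewrite // Hz2.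
have P1 k : k < #|T| -> index (nth v1 s1 k) s1 = k.
  by move=> Hk; apply: index_uniq; rewrite // Hz1.
exists (fun x => nth v2 s2 (index x s1)); split.
  exists (fun y => nth v1 s1 (index y s2)) => x.
  - by rewrite P2 // nth_index.
  - by rewrite P1 // nth_index.
move=> x y; rewrite He1 He2 !P2 //.
have Hx := Hi1 x; have Hy := Hi1 y.
case: (posnP (index x s1)) => Hx0; case: (posnP (index y s1)) => Hy0 //=;
  rewrite ?HQ ?Hx0 ?Hy0 ?Hx ?Hy //.
Qed.

Lemma tree_facts (T : finType) (e : rel T) : is_tree e ->
  \sum_(v : T) deg e v = (#|T|.-1).*2 /\ (1 < #|T| -> forall v, 0 < deg e v).
Proof.
move=> [Hn [[Hsym Hirr] [Hc Hac]]].
have [r _] := card_gt0P Hn.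
have Hh : forall v, v != r -> dist e r (pr e r v) < dist e r v.
  by move=> v Hv; have [_ <-] := pr_spec Hc Hv.
have He : forall x y, e x y = ((x != r) && (pr e r x == y)) || ((y != r) && (pr e r y == x)).
  by move=> x y; apply: parent_form.
split; first exact: (handshake Hh He).
move=> H1 v; rewrite (deg_parent Hh He).
case: (eqVneq v r) => [->|Hv] //=.
have [u Hu] : exists u, u != r.
  have : 0 < #|[set~ r]| by rewrite cardsC1 -ltnS prednK.
  by case/card_gt0P => u; rewrite !inE => Hu; exists u.
set w := iter (dist e r u).-1 (pr e r) u.
have Hdu : 0 < dist e r u by rewrite lt0n (d_eq0 Hc).
have Hdw : dist e r w = 1.
  by rewrite /w (d_iter Hc) ?leq_pred // -subn1 subKn.
have Hw : w != r by rewrite -(d_eq0 Hc) Hdw.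
have [_ Hpw] := pr_spec Hc Hw; rewrite Hdw in Hpw.
have Hpr : pr e r w = r by apply/eqP; rewrite -(d_eq0 Hc); case: Hpw => ->.
apply/card_gt0P; exists w; by rewrite inE Hw Hpr eqxx.
Qed.

Lemma leq_sum_nat a b (F G : nat -> nat) :
  (forall k, a <= k < b -> F k <= G k) -> \sum_(a <= k < b) F k <= \sum_(a <= k < b) G k.
Proof.
move=> H; rewrite big_nat_cond [X in _ <= X]big_nat_cond.
apply: leq_sum => k /andP[Hk _]; exact: H.
Qed.

Section Arith.
Variable d : seq nat.
Local Notation n := (size d).
Hypothesis Hn : 0 < n.
Hypothesis Hsort : sorted geq d.
Hypothesis Hsum : sumn d = (n.-1).*2.
Hypothesis Hpos : 1 < n -> forall k, k < n -> 0 < nth 0 d k.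

Definition Cd i := \sum_(0 <= k < i) (nth 0 d k - (0 < k)).
Definition Pd i := \sum_(0 <= k < i) nth 0 d k.

Lemma Cd_S i : Cd i.+1 = Cd i + (nth 0 d i - (0 < i)).
Proof. by rewrite /Cd big_nat_recr. Qed.

Lemma Cd_mono i j : i <= j -> Cd i <= Cd j.
Proof.
move=> Hij; rewrite -(subnKC Hij); elim: (j - i) => [|k IH]; first by rewrite addn0.
by rewrite addnS Cd_S (leq_trans IH) ?leq_addr.
Qed.

Lemma CP i : 0 < i <= n -> Cd i + i.-1 = Pd i.
Proof.
elim: i => [|i IH] // /andP[_ Hi].
case: (posnP i) => [->|Hi0].
  by rewrite /Cd /Pd !big_nat1 /= subn0 addn0.
rewrite Cd_S /Pd big_nat_recr //= -/(Pd i) -IH ?Hi0 ?(ltnW Hi) //.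
have Hd : 0 < nth 0 d i by apply: Hpos => //; apply: leq_ltn_trans Hi.
move/ltP: Hd; move/ltP: Hi0 => H1 H2.
rewrite -?plusE -?minusE /=; lia.
Qed.

Lemma Pn : Pd n = (n.-1).*2.
Proof. by rewrite -Hsum sumnE (big_nth 0) /Pd. Qed.

Lemma Cn : Cd n = n.-1.
Proof.
have := @CP n; rewrite Hn leqnn Pn -addnn => /(_ isT) /eqP.
by rewrite eqn_add2r => /eqP.
Qed.

Lemma nth_geq k j : k <= j -> j < n -> nth 0 d j <= nth 0 d k.
Proof.
move=> Hkj Hj.
have Htr : transitive geq by move=> a b c H1 H2; exact: leq_trans H2 H1.
have := sorted_leq_nth Htr (fun x => leqnn x) 0 Hsort.
move=> /(_ k j); rewrite !inE; apply => //; exact: leq_ltn_trans Hj.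
Qed.

Lemma Cd_ge j : j < n -> j <= Cd j.
Proof.
move=> Hj; case: (posnP j) => [->|Hj0] //.
have HC := @CP j; rewrite Hj0 (ltnW Hj) in HC; have {}HC := HC isT.
set m := nth 0 d j.
have H1 : j * m <= Pd j.
  have -> : j * m = \sum_(0 <= k < j) m by rewrite sum_nat_const_nat subn0.
  rewrite /Pd; apply: leq_sum_nat => k /andP[_ Hk].
  by apply: nth_geq => //; apply: ltnW.
set R := \sum_(j <= k < n) nth 0 d k.
have H2 : R <= (n - j) * m.
  rewrite /R -sum_nat_const_nat; apply: leq_sum_nat => k /andP[Hk1 Hk2].
  exact: nth_geq.
have H3 : Pd j + R = (n.-1).*2.
  by rewrite -Pn /Pd /R -big_cat_nat // ltnW.
have H4 : (n - j) * (j * m) <= (n - j) * Pd j by rewrite leq_mul2l H1 orbT.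
have H5 : j * R <= j * ((n - j) * m) by rewrite leq_mul2l H2 orbT.
have H6 : j * R <= (n - j) * Pd j by apply: leq_trans H5 _; rewrite mulnCA.
clear H1 H2 H4 H5.
move: (Cd j) (Pd j) R m HC H3 H6 Hj Hj0 => C P R m.
rewrite -!muln2 => HC H3 H6 Hj Hj0.
move/ltP: Hj; move/ltP: Hj0; move/leP: H6; move: HC H3.
rewrite -?plusE -?minusE -?multE /= => HC H3 H6 Hj0 Hj.
apply/leP; rewrite -?plusE -?minusE -?multE.
nia.
Qed.

Definition Qp j := count (fun k => Cd k.+1 < j) (iota 0 n).

Lemma Qp_mono j j' : j <= j' -> Qp j <= Qp j'.
Proof. move=> H; apply: sub_count => k /= Hk; exact: leq_trans Hk H. Qed.

Lemma Qp0 : Qp 0 = 0.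
Proof. by rewrite /Qp (@eq_count _ _ pred0) ?count_pred0. Qed.

Lemma Qp_lt j : 0 < j < n -> Qp j < j.
Proof.
move=> /andP[Hj0 Hj].
apply: (@leq_ltn_trans (count (fun k => k < j.-1) (iota 0 n))).
  apply: sub_count => k /=; apply: contraTT; rewrite -!leqNgt => Hk.
  have Hjk : j <= k.+1 by rewrite -(prednK Hj0) ltnS.
  exact: leq_trans (Cd_ge Hj) (Cd_mono Hjk).
rewrite count_lt_iota gtn_min ltn_predL Hj0.
by [].
Qed.

Lemma Qp_lt_n j : j < n -> Qp j < n.
Proof.
move=> Hj; case: (posnP j) => [->|Hj0]; first by rewrite Qp0.
have := @Qp_lt j; rewrite Hj0 Hj => /(_ isT) H; exact: ltn_trans H Hj.
Qed.

Lemma Qp_eq i j : i < n -> 0 < j < n -> (Qp j == i) = (Cd i < j <= Cd i.+1).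
Proof.
move=> Hi /andP[Hj0 Hj].
have Hdc : forall a b, a <= b -> b < n -> Cd b.+1 < j -> Cd a.+1 < j.
  by move=> a b Hab _ H; apply: leq_ltn_trans H; apply: Cd_mono.
have HQ := count_dc Hdc; rewrite -/Qp in HQ.
rewrite eqn_leq [Qp j <= i]leqNgt HQ Hi /= -leqNgt andbC.
congr (_ && _).
case: (posnP i) => [->|Hi0]; first by rewrite /Cd big_geq.
by rewrite -(prednK Hi0) HQ prednK // (ltnW Hi).
Qed.

Lemma children i : i < n ->
  count (fun j => (0 < j) && (Qp j == i)) (iota 0 n) = nth 0 d i - (0 < i).
Proof.
move=> Hi.
rewrite (@eq_in_count _ _ (fun j => (Cd i).+1 <= j < (Cd i.+1).+1)); last first.
  move=> j; rewrite mem_iota add0n /= => Hj.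
  case: (posnP j) => [->|Hj0] /=; first by [].
  by rewrite Qp_eq ?Hj0 ?Hj // ltnS.
rewrite count_interval ?ltnS ?Cd_mono //.
  by rewrite subSS Cd_S addKn.
by rewrite (leq_ltn_trans (Cd_mono Hi)) // Cn prednK.
Qed.

End Arith.

Lemma seq_max (N : nat) (c : seq 'I_N) : c != [::] ->
  exists2 m, m \in c & forall x, x \in c -> x <= m.
Proof.
elim: c => [|a c IH] // _.
case: (eqVneq c [::]) => [->|Hc].
  exists a; first exact: mem_head.
  by move=> x; rewrite inE => /eqP ->.
have [m Hm Hmax] := IH Hc.
case: (leqP a m) => Ham.
  exists m; first by rewrite inE Hm orbT.
  by move=> x; rewrite inE => /orP [/eqP -> | /Hmax].
exists a; first exact: mem_head.
move=> x; rewrite inE => /orP [/eqP -> // | /Hmax H].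
exact: leq_trans H (ltnW Ham).
Qed.

Section Construct.
Variable N : nat.
Variable r0 : 'I_N.
Hypothesis Hr0 : val r0 = 0.
Variable Q : 'I_N -> 'I_N.
Hypothesis HQlt : forall v, v != r0 -> Q v < v.
Hypothesis HQmono : forall u v, u != r0 -> v != r0 -> u <= v -> Q u <= Q v.

Definition ge (x y : 'I_N) : bool := ((x != r0) && (Q x == y)) || ((y != r0) && (Q y == x)).

Lemma ge_sym : symmetric ge.
Proof. by move=> x y; rewrite /ge orbC. Qed.

Lemma ge_irr : irreflexive ge.
Proof.
move=> x; rewrite /ge orbb; apply/negP => /andP[Hx /eqP Hq].
by have := HQlt Hx; rewrite Hq ltnn.
Qed.

Lemma ge_Q v : v != r0 -> ge v (Q v).
Proof. by move=> Hv; rewrite /ge Hv eqxx. Qed.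

Lemma ge_conn : connected ge.
Proof.
have H : forall k (x : 'I_N), x < k -> connect ge x r0.
  elim => [|k IH] x //; rewrite ltnS => Hx.
  case: (eqVneq x r0) => [->|Hxr]; first exact: connect0.
  apply: connect_trans (connect1 (ge_Q Hxr)) _; apply: IH.
  exact: leq_trans (HQlt Hxr) Hx.
move=> x y; apply: connect_trans (H _ x (ltnSn _)) _.
rewrite (sym_connect_sym ge_sym); exact: H _ y (ltnSn _).
Qed.

Lemma ge_lt u v : ge u v -> u < v -> v != r0 /\ Q v = u.
Proof.
rewrite /ge => /orP [/andP [Hu /eqP Hq] | /andP [Hv /eqP Hq]] Huv; last by [].
by have := ltn_trans (HQlt Hu) Huv; rewrite Hq ltnn.
Qed.

Lemma ge_acyc : acyclic ge.
Proof.
move=> c Uc Hsz; apply/negP => Hcyc.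
have Hne : c != [::] by case: c Hsz Uc Hcyc.
have [m Hm Hmax] := seq_max Hne.
case: (rot_to Hm) => i s' Hrot.
have Hcyc' : cycle ge (m :: s') by rewrite -Hrot rot_cycle.
have Uc' : uniq (m :: s') by rewrite -Hrot rot_uniq.
have Hsz' : 3 <= size (m :: s') by rewrite -Hrot size_rot.
have Hmax' : forall x, x \in m :: s' -> x <= m by move=> x; rewrite -Hrot mem_rot; exact: Hmax.
clear Hrot; case: s' Hcyc' Uc' Hsz' Hmax' => [|x q] //= Hcyc' Uc' Hsz' Hmax'.
move: Hcyc' => /andP[Hmx]; rewrite rcons_path => /andP[_ Hlm].
move: Uc' => /and3P[]; rewrite inE negb_or => /andP[Hmx' Hmq] Hxq _.
have Hqne : 0 < size q by [].
have Hxm : x < m.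
  rewrite ltn_neqAle eq_sym Hmx' /=; apply: Hmax'; by rewrite !inE eqxx orbT.
set y := last x q.
have Hyq : y \in q by rewrite /y; case: q Hqne {Hmq Hxq Hmax' Hlm y Hsz'} => // z q' _; exact: (mem_last z q').
have Hym : y < m.
  rewrite ltn_neqAle; apply/andP; split.
    by apply: contraNneq Hmq => /val_inj <-.
  apply: Hmax'; by rewrite !inE Hyq !orbT.
have Hxm' : ge x m by rewrite ge_sym.
have [_ Hqx] := ge_lt Hxm' Hxm.
have [_ Hqy] := ge_lt Hlm Hym.
by move: Hxq; rewrite -Hqx Hqy Hyq.
Qed.

Lemma N_gt0 : 0 < N.
Proof. exact: leq_ltn_trans (leq0n _) (ltn_ord r0). Qed.

Lemma neq_r0 (v : 'I_N) : (v != r0) = (0 < v).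
Proof. by rewrite lt0n -Hr0 -val_eqE. Qed.

Lemma ge_tree : is_tree ge.
Proof.
split; first by rewrite card_ord N_gt0.
split; first by split; [exact: ge_sym | exact: ge_irr].
split; [exact: ge_conn | exact: ge_acyc].
Qed.

Local Notation dd := (dist ge r0).

Lemma KQ v : v != r0 -> (dd (Q v)).+1 = dd v.
Proof.
have H : forall k (v : 'I_N), v < k -> v != r0 -> (dd (Q v)).+1 = dd v.
  elim => [|k IH] x //; rewrite ltnS => Hx Hxr.
  have Hqx : ge (Q x) x by rewrite ge_sym ge_Q.
  case: (edge_d ge_sym ge_irr ge_conn ge_acyc r0 Hqx) => // H2.
  have Hqr : Q x != r0 by rewrite -(d_eq0 ge_conn) -H2.
  have H3 := IH (Q x) (leq_trans (HQlt Hxr) Hx) Hqr.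
  have Hqq : ge (Q (Q x)) (Q x) by rewrite ge_sym ge_Q.
  have := lower_unique ge_sym ge_conn ge_acyc Hqq (ge_Q Hxr) H3 H2.
  move=> Heq; have := ltn_trans (HQlt Hqr) (HQlt Hxr).
  by rewrite Heq ltnn.
move=> Hv; exact: H _ v (ltnSn _) Hv.
Qed.

Lemma dmono (u v : 'I_N) : u <= v -> dd u <= dd v.
Proof.
have H : forall k (u v : 'I_N), v < k -> u <= v -> dd u <= dd v.
  elim => [|k IH] x y //; rewrite ltnS => Hy Hxy.
  case: (eqVneq x r0) => [->|Hxr]; first by rewrite dist_self.
  have Hyr : y != r0 by rewrite neq_r0 (leq_trans _ Hxy) // -neq_r0.
  rewrite -(KQ Hxr) -(KQ Hyr) ltnS; apply: IH.
    exact: leq_trans (HQlt Hyr) Hy.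
  exact: HQmono.
move=> Huv; exact: H _ u v (ltnSn _) Huv.
Qed.

Lemma find_Q u : u != r0 -> find (ge u) (enum 'I_N) = Q u.
Proof.
move=> Hu; rewrite -[RHS]index_enum_ord; apply: find_first.
- exact: enum_uniq.
- exact: mem_enum.
- exact: ge_Q.
- move=> y _; rewrite !index_enum_ord /ge Hu /=.
  case/orP => [/eqP -> // | /andP [Hy /eqP Hqy]].
  apply: ltnW; apply: ltn_trans (HQlt Hu) _; rewrite -{1}Hqy; exact: HQlt.
Qed.

Lemma child_Q w v : child ge r0 w v -> v != r0 /\ Q v = w.
Proof.
rewrite /child /ge => /andP [/orP [/andP [Hw /eqP Hq] | /andP [Hv /eqP Hq]] /eqP Hd] //.
have := KQ Hw; rewrite Hq Hd => /eqP; by rewrite -addn2 -[X in _ == X]addn0 eqn_add2l.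
Qed.

Lemma deg_ge v : deg ge v = (v != r0) + #|[set u | (u != r0) && (Q u == v)]|.
Proof. by apply: (deg_parent (h := fun x : 'I_N => val x)). Qed.

Lemma ge_bfd : (forall u v : 'I_N, u <= v -> deg ge v <= deg ge u) ->
  BFD_ordering ge r0 (enum 'I_N).
Proof.
move=> Hdeg; split.
- split.
  + split; [exact: enum_uniq | move=> v; exact: mem_enum].
  + by apply: val_inj => /=; rewrite -nth0 nth_enum_ord ?Hr0 ?N_gt0.
  + by move=> u v; rewrite /prec !index_enum_ord => H; apply: dmono; apply: ltnW.
  + move=> u v Hu Hv; rewrite /prec !index_enum_ord !find_Q // => H.
    by apply: HQmono => //; apply: ltnW.
- move=> w1 w2 v1 v2; rewrite /prec !index_enum_ord => Hw C1 C2.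
  have [Hv1 Hq1] := child_Q C1; have [Hv2 Hq2] := child_Q C2.
  rewrite ltnNge; apply/negP => Hle.
  by have := HQmono Hv2 Hv1 Hle; rewrite Hq1 Hq2 leqNgt Hw.
- by move=> v u; rewrite /prec !index_enum_ord => H; apply: Hdeg; apply: ltnW.
Qed.

End Construct.

Lemma bfd_exist (pi : seq nat) (e0 : rel 'I_(size pi)) : in_T_pi e0 ->
  exists e : rel 'I_(size pi), in_T_pi e /\ BFD_tree e.
Proof.
move=> [Ht0 Hd0].
have [Hsum0 Hpos0] := tree_facts Ht0.
rewrite card_ord in Hsum0 Hpos0.
have HN : 0 < size pi by case: Ht0; rewrite card_ord.
pose d := sort geq pi.
have Hsz : size d = size pi by rewrite size_sort.
have Hsort : sorted geq d by apply: sort_sorted => a b; exact: leq_total.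
have Hpd : perm_eq d pi by rewrite perm_sort.
have Hsumd : sumn d = ((size d).-1).*2.
  rewrite (perm_sumn Hpd) -(perm_sumn Hd0) Hsz -Hsum0 sumnE big_map.
  by rewrite big_enum.
have Hposd : 1 < size d -> forall k, k < size d -> 0 < nth 0 d k.
  move=> H1 k Hk; have : nth 0 d k \in pi by rewrite -(perm_mem Hpd) mem_nth.
  rewrite -(perm_mem Hd0) => /mapP [v _ ->]; apply: Hpos0; by rewrite -Hsz.
have HNd : 0 < size d by rewrite Hsz.
pose r0 : 'I_(size pi) := Ordinal HN.
have Hr0 : val r0 = 0 by [].
pose Qo (j : 'I_(size pi)) : 'I_(size pi) := insubd r0 (Qp d j).
have HQv : forall j : 'I_(size pi), val (Qo j) = Qp d j.
  move=> j; rewrite val_insubd; suff -> : Qp d j < size pi by [].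
  have Hj : j < size d by rewrite Hsz.
  by have := Qp_lt_n HNd Hsort Hsumd Hposd Hj; rewrite Hsz.
have HQlt : forall v, v != r0 -> Qo v < v.
  move=> v; rewrite (neq_r0 Hr0) => Hv; rewrite HQv.
  have Hv2 : 0 < v < size d by rewrite Hv Hsz /=.
  exact: (Qp_lt Hsort Hsumd Hposd Hv2).
have HQmono : forall u v, u != r0 -> v != r0 -> u <= v -> Qo u <= Qo v.
  by move=> u v _ _ H; rewrite !HQv; exact: Qp_mono.
pose e := ge r0 Qo.
have Henum : forall x : 'I_(size pi), x \in enum 'I_(size pi) by move=> x; rewrite mem_enum.
have Hdeg : forall v : 'I_(size pi), deg e v = nth 0 d v.
  move=> v; rewrite (deg_ge HQlt) (@card_count _ (enum 'I_(size pi))) //; last exact: enum_uniq.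
  have -> : count (fun u => (u != r0) && (Qo u == v)) (enum 'I_(size pi))
          = count (fun j => (0 < j) && (Qp d j == v)) (iota 0 (size d)).
    rewrite Hsz -val_enum_ord count_map; apply: eq_count => u /=.
    by rewrite (neq_r0 Hr0) -val_eqE /= HQv.
  have Hv : v < size d by rewrite Hsz.
  rewrite (children HNd Hsumd Hposd Hv) (neq_r0 Hr0).
  case: (posnP (val v)) => [_|Hv0]; first by rewrite add0n subn0.
  rewrite add1n subn1 prednK //; apply: Hposd => //.
  exact: leq_ltn_trans Hv0 Hv.
have Hmon : forall u v : 'I_(size pi), u <= v -> deg e v <= deg e u.
  move=> u v Huv; rewrite !Hdeg; apply: (nth_geq Hsort Huv).
  by rewrite Hsz.
exists e; split.
  split; first exact: (ge_tree HQlt).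
  rewrite /has_degree_seq (eq_map Hdeg) (map_comp (nth 0 d) val) val_enum_ord -Hsz.
  by have := mkseq_nth 0 d; rewrite /mkseq => ->.
split; first exact: (ge_tree HQlt).
exists r0, (enum 'I_(size pi)); exact: ge_bfd.
Qed.

Theorem lemma8 (pi : seq nat) :
  tree_sequence pi ->
  (exists e : rel 'I_(size pi), in_T_pi e /\ BFD_tree e) /\
  (forall e1 e2 : rel 'I_(size pi),
      in_T_pi e1 -> in_T_pi e2 -> BFD_tree e1 -> BFD_tree e2 ->
      isomorphic e1 e2).
Proof.
move=> [e0 H0]; split; first exact: bfd_exist H0.
move=> e1 e2 [_ H1] [_ H2] B1 B2; exact: bfd_unique H1 H2 B1 B2.
Qed.
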